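(* Let $X$ and $Y$ be nontrivial real Banach spaces. (a) If $X^*$ has the weak$^*$ strong diameter $2$ property, then $(X\oplus_1 Y)^*$ has the weak$^*$ strong diameter $2$ property. (b) If $1<p<\infty$, then $(X\oplus_p Y)^*$ does not have the weak$^*$ strong diameter $2$ property. (c) If $X^*$ and $Y^*$ have the weak$^*$ strong diameter $2$ property, then $(X\oplus_\infty Y)^*$ has the weak$^*$ strong diameter $2$ property. (d) If $(X\oplus_\infty Y)^*$ has the weak$^*$ strong diameter $2$ property, then $X^*$ has the weak$^*$ strong diameter $2$ property.
   Context: For $1\le p<\infty$, $X\oplus_p Y$ is $X\times Y$ with norm $(\|x\|^p+\|y\|^p)^{1/p}$; $X\oplus_\infty Y$ has norm $\max\{\|x\|,\|y\|\}$. For a Banach space $Z$, a weak$^*$ slice of $B_{Z^*}$ is a set $\{z^*\in B_{Z^*}: z^*(z)>1-\alpha\}$ with $z\in S_Z$, $\alpha>0$; $Z^*$ has the weak$^*$ strong diameter $2$ property if every convex combination $\sum_{i=1}^n\lambda_iS_i$ ($n\in\mathbb{N}$, $\lambda_i\geq0$, $\sum\lambda_i=1$, $S_i$ weak$^*$ slices of $B_{Z^*}$) has diameter $2$. *)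

(* Defs.v *)
From HB Require Import structures.
From mathcomp Require Import all_boot all_order all_algebra.
From mathcomp Require Import all_classical all_reals all_analysis.
Set Implicit Arguments. Unset Strict Implicit. Unset Printing Implicit Defensive.
Import Order.TTheory GRing.Theory Num.Theory.
Import numFieldNormedType.Exports.
Local Open Scope classical_set_scope.
Local Open Scope ring_scope.

(* A real vector space V equipped with a norm function N : V -> R.
   Elements of the dual are represented as linear maps V -> R. *)
Section Dual.
Variables (R : realType) (V : lmodType R) (N : V -> R).

Definition is_linear_functional (f : V -> R) : Prop :=
  forall (a : R) (x y : V), f (a *: x + y) = a * f x + f y.

Definition dual_ball : set (V -> R) :=
  [set f | is_linear_functional f /\ forall x, `|f x| <= N x].

Definition dual_norm (f : V -> R) : R :=
  sup [set `|f x| | x in [set x : V | N x <= 1]].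

Definition wstar_slice (z : V) (alpha : R) : set (V -> R) :=
  [set f | dual_ball f /\ 1 - alpha < f z].

Definition is_wstar_slice (S : set (V -> R)) : Prop :=
  exists (z : V) (alpha : R), N z = 1 /\ 0 < alpha /\ S = wstar_slice z alpha.

Definition comb_sets (n : nat) (lambda : 'I_n -> R) (S : 'I_n -> set (V -> R))
  : set (V -> R) :=
  [set g | exists f : 'I_n -> V -> R,
     (forall i, S i (f i)) /\ g = (fun x => \sum_(i < n) lambda i * f i x)].

Definition dual_diam (A : set (V -> R)) : \bar R :=
  ereal_sup [set d | exists f g, A f /\ A g /\
                     d = (dual_norm (fun x => f x - g x))%:E].

Definition wstar_SD2P : Prop :=
  forall (n : nat) (lambda : 'I_n -> R) (S : 'I_n -> set (V -> R)),
    (forall i, 0 <= lambda i) -> \sum_(i < n) lambda i = 1 ->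
    (forall i, is_wstar_slice (S i)) ->
    dual_diam (comb_sets lambda S) = 2%:E.

End Dual.

Definition norm_sum1 (R : realType) (X Y : normedModType R) (v : X * Y) : R :=
  `|v.1| + `|v.2|.
Definition norm_sump (R : realType) (p : R) (X Y : normedModType R) (v : X * Y) : R :=
  powR (powR `|v.1| p + powR `|v.2| p) p^-1.
Definition norm_suminf (R : realType) (X Y : normedModType R) (v : X * Y) : R :=
  Num.max `|v.1| `|v.2|.

(* Main.v *)
Require Import Defs.
From HB Require Import structures.
From mathcomp Require Import all_boot all_order all_algebra.
From mathcomp Require Import all_classical all_reals all_analysis.
Import Order.TTheory GRing.Theory Num.Theory.
Import numFieldNormedType.Exports.
Local Open Scope classical_set_scope.
Local Open Scope ring_scope.
From mathcomp Require Import ring lra.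

Set Implicit Arguments. Unset Strict Implicit. Unset Printing Implicit Defensive.

Section Gen.
Variables (R : realType) (V : lmodType R) (N : V -> R).

Lemma lin_add (f : V -> R) : is_linear_functional f -> forall x y, f (x + y) = f x + f y.
Proof. by move=> fl x y; rewrite -[x in x + _]scale1r fl mul1r. Qed.

Lemma lin0 (f : V -> R) : is_linear_functional f -> f 0 = 0.
Proof. by move=> fl; apply/(addrI (f 0)); rewrite -lin_add // !addr0. Qed.

Lemma linZ (f : V -> R) a x : is_linear_functional f -> f (a *: x) = a * f x.
Proof. by move=> fl; rewrite -[a *: x]addr0 fl lin0 // addr0. Qed.

Lemma linN (f : V -> R) x : is_linear_functional f -> f (- x) = - f x.
Proof. by move=> fl; rewrite -scaleN1r linZ // mulN1r. Qed.

Lemma ball_le (f : V -> R) x : dual_ball N f -> `|f x| <= N x.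
Proof. by case=> _; apply. Qed.

Lemma conv_bound n (l : 'I_n -> R) (a : 'I_n -> R) c :
  (forall i, 0 <= l i) -> \sum_i l i = 1 -> (forall i, `|a i| <= c) ->
  `|\sum_i l i * a i| <= c.
Proof.
move=> l0 l1 ac; apply: (le_trans (ler_norm_sum _ _ _)).
apply: (@le_trans _ _ (\sum_i l i * c)); last by rewrite -mulr_suml l1 mul1r.
apply: ler_sum => i _; rewrite normrM ger0_norm //; exact: ler_wpM2l.
Qed.

Definition Apx (A : set (V -> R)) := forall e : R, 0 < e ->
  exists f g, A f /\ A g /\ 2 - e < dual_norm N (fun x => f x - g x).

Hypothesis N0 : N 0 = 0.

Lemma dual_norm_le (h : V -> R) c : 0 <= c -> (forall x, N x <= 1 -> `|h x| <= c) ->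
  dual_norm N h <= c.
Proof.
move=> c0 hc; apply: ge_sup; first by exists `|h 0|, 0 => //=; rewrite N0.
by move=> _ [x Nx <-]; apply: hc.
Qed.

Lemma dual_norm_hs (h : V -> R) c : (forall x, N x <= 1 -> `|h x| <= c) ->
  has_sup [set `|h x| | x in [set x : V | N x <= 1]].
Proof.
move=> hc; split; first by exists `|h 0|, 0 => //=; rewrite N0.
by exists c => _ [x Nx <-]; apply: hc.
Qed.

Lemma dual_norm_ge (h : V -> R) c x : (forall x, N x <= 1 -> `|h x| <= c) ->
  N x <= 1 -> `|h x| <= dual_norm N h.
Proof.
move=> hc Nx; have := sup_upper_bound (dual_norm_hs hc); apply; by exists x.
Qed.

Lemma dual_norm_adh (h : V -> R) c e : (forall x, N x <= 1 -> `|h x| <= c) -> 0 < e ->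
  exists x, N x <= 1 /\ dual_norm N h - e < `|h x|.
Proof.
move=> hc e0; have [_ [x Nx <-] lt] := sup_adherent e0 (dual_norm_hs hc).
by exists x.
Qed.

Lemma comb_diff_bound n (l : 'I_n -> R) (S : 'I_n -> set (V -> R)) f g x :
  (forall i, 0 <= l i) -> \sum_i l i = 1 ->
  (forall i, S i `<=` dual_ball N) ->
  comb_sets l S f -> comb_sets l S g -> `|f x - g x| <= 2 * N x.
Proof.
move=> l0 l1 Sb [ff [ffS ->]] [gg [ggS ->]].
rewrite -sumrB; under eq_bigr do rewrite -mulrBr.
apply: conv_bound => // i; apply: (le_trans (ler_normB _ _)).
rewrite mulr2n mulrDl mul1r; apply: lerD; apply: ball_le; exact: Sb.
Qed.

Lemma slice_ball (S : set (V -> R)) : is_wstar_slice N S -> S `<=` dual_ball N.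
Proof. by move=> [z [a [_ [_ ->]]]] f []. Qed.

Lemma SD2P_of :
  (forall n (l : 'I_n -> R) (S : 'I_n -> set (V -> R)),
    (forall i, 0 <= l i) -> \sum_i l i = 1 ->
    (forall i, is_wstar_slice N (S i)) -> Apx (comb_sets l S)) ->
  wstar_SD2P N.
Proof.
move=> H n l S l0 l1 Ss; have Sb i := slice_ball (Ss i).
have hb f g : comb_sets l S f -> comb_sets l S g ->
    forall x, N x <= 1 -> `|f x - g x| <= 2.
  move=> Af Ag x Nx; apply: (le_trans (comb_diff_bound x l0 l1 Sb Af Ag)).
  by rewrite -[leRHS]mulr1 ler_wpM2l.
apply/eqP; rewrite eq_le; apply/andP; split.
  apply: ge_ereal_sup => _ [f [g [Af [Ag ->]]]]; rewrite lee_fin.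
  by apply: dual_norm_le => //; apply: hb.
apply/lee_addgt0Pr => e e0.
have [f [g [Af [Ag lt]]]] := H n l S l0 l1 Ss e e0.
apply: (@le_trans _ _ ((dual_norm N (fun x => f x - g x))%:E + e%:E)).
  by rewrite -EFinD lee_fin -lerBlDr ltW.
apply: leeD => //; apply: ereal_sup_ubound; by exists f, g.
Qed.

Lemma SD2P_apx : wstar_SD2P N ->
  forall n (l : 'I_n -> R) (S : 'I_n -> set (V -> R)),
    (forall i, 0 <= l i) -> \sum_i l i = 1 ->
    (forall i, is_wstar_slice N (S i)) -> Apx (comb_sets l S).
Proof.
move=> H n l S l0 l1 Ss e e0.
have : ((2 - e)%:E < dual_diam N (comb_sets l S))%E.
  by rewrite (H n l S l0 l1 Ss) lte_fin ltrBlDr ltrDl.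
by move=> /ereal_sup_gt [_ [f [g [Af [Ag ->]]]]]; rewrite lte_fin => lt; exists f, g.
Qed.

End Gen.

Section P.
Variables (R : realType) (X Y : lmodType R).
Lemma pair_split (x : X) (y : Y) : (x, y) = (x, 0) + (0, y).
Proof. by congr (_, _); rewrite /= ?addr0 ?add0r. Qed.
Lemma pairZl a (x x' : X) : (a *: x + x', 0 : Y) = a *: (x, 0) + (x', 0).
Proof. by congr (_, _); rewrite /= scaler0 addr0. Qed.
Lemma pairZr a (y y' : Y) : (0 : X, a *: y + y') = a *: (0, y) + (0, y').
Proof. by congr (_, _); rewrite /= scaler0 addr0. Qed.
Lemma pairN (x : X) (y : Y) : (- x, - y) = - (x, y).
Proof. by []. Qed.
Lemma pairZ a (x : X) (y : Y) : (a *: x, a *: y) = a *: (x, y).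
Proof. by []. Qed.
End P.

Section PartD.
Variables (R : realType) (X Y : normedModType R).
Local Notation Ni := (@norm_suminf R X Y).

Lemma Ni0 : Ni 0 = 0.
Proof. by rewrite /norm_suminf /= !normr0 max_l. Qed.
Lemma Ni_x0 (x : X) : Ni (x, 0) = `|x|.
Proof. by rewrite /norm_suminf /= normr0 max_l. Qed.
Lemma Ni_0y (y : Y) : Ni (0, y) = `|y|.
Proof. by rewrite /norm_suminf /= normr0 max_r. Qed.
Lemma Ni_l (x : X) (y : Y) : `|x| <= Ni (x, y).
Proof. by rewrite /norm_suminf le_max lexx. Qed.
Lemma Ni_r (x : X) (y : Y) : `|y| <= Ni (x, y).
Proof. by rewrite /norm_suminf le_max lexx orbT. Qed.

Lemma inf_small (f : X * Y -> R) x b : dual_ball Ni f -> `|x| = 1 ->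
  1 - b < f (x, 0) -> forall y, `|y| <= 1 -> `|f (0, y)| <= b.
Proof.
move=> fb x1 fx y y1; have fl := fb.1.
have key : forall y', `|y'| <= 1 -> f (0, y') <= b.
  move=> y' y'1.
  have : f (x, y') <= 1.
    apply: le_trans (ler_norm _) _; apply: le_trans (ball_le _ fb) _.
    by rewrite /norm_suminf /= x1 max_l.
  rewrite (pair_split x y') lin_add //; lra.
have h1 := key y y1; have := key (- y); rewrite normrN => /(_ y1).
rewrite -[X in f (X, _)]oppr0 pairN linN // => h2.
by rewrite ler_norml; apply/andP; split; lra.
Qed.

Lemma part_d : wstar_SD2P Ni -> wstar_SD2P (fun x : X => `|x|).
Proof.
move=> H; apply: SD2P_of; first exact: normr0.
move=> n l S l0 l1 Ss e e0.
have /choice [za Hza] : forall i, exists p : X * R, `|p.1| = 1 /\ 0 < p.2 /\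
    S i = wstar_slice (fun x : X => `|x|) p.1 p.2.
  by move=> i; have [z [a [z1 [a0 ->]]]] := Ss i; exists (z, a).
pose b := e / 3.
have b0 : 0 < b by rewrite divr_gt0.
pose T i := wstar_slice Ni ((za i).1, 0) (Num.min (za i).2 b).
have Ts i : is_wstar_slice Ni (T i).
  exists ((za i).1, 0), (Num.min (za i).2 b); split.
    by rewrite Ni_x0; case: (Hza i).
  split=> //; rewrite lt_min b0 andbT; by case: (Hza i) => _ [].
have [F [G [[f [fT ->]] [[f' [f'T ->]] lt]]]] := SD2P_apx H l0 l1 Ts b0.
have gS : forall (ff : 'I_n -> X * Y -> R), (forall i, T i (ff i)) ->
    forall i, S i (fun x => ff i (x, 0)).
  move=> ff ffT i; have [z1 [a0 ->]] := Hza i; have [[fl fbd] fz] := ffT i.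
  split; first split.
  - by move=> a x y; rewrite pairZl fl.
  - by move=> x; rewrite -Ni_x0; apply: fbd.
  - apply: le_lt_trans fz; rewrite lerD2l lerN2; by rewrite ge_min lexx.
have minb : forall i, Num.min (za i).2 b <= b by move=> i; by rewrite ge_min lexx orbT.
exists (fun x => \sum_i l i * f i (x, 0)), (fun x => \sum_i l i * f' i (x, 0)).
split; first by exists (fun i x => f i (x, 0)); split => //; apply: gS.
split; first by exists (fun i x => f' i (x, 0)); split => //; apply: gS.
set D := dual_norm _ _.
have nX : (fun x : X => `|x|) 0 = 0 by rewrite /= normr0.
have hbX : forall x : X, `|x| <= 1 ->
    `|\sum_i l i * f i (x, 0) - \sum_i l i * f' i (x, 0)| <= 2.
  move=> x x1.
  have cs1 : comb_sets l S (fun x => \sum_i l i * f i (x, 0)).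
    by exists (fun i x => f i (x, 0)); split => //; apply: gS.
  have cs2 : comb_sets l S (fun x => \sum_i l i * f' i (x, 0)).
    by exists (fun i x => f' i (x, 0)); split => //; apply: gS.
  apply: le_trans (comb_diff_bound x l0 l1 (fun i => slice_ball (Ss i)) cs1 cs2) _.
  by rewrite -[leRHS]mulr1 ler_wpM2l.
have D0 : 0 <= D.
  have h0 : `|0 : X| <= 1 by rewrite normr0.
  exact: le_trans (normr_ge0 _) (dual_norm_ge nX hbX h0).
have : dual_norm Ni (fun x => \sum_i l i * f i x - \sum_i l i * f' i x) <= D + 2 * b.
  apply: (dual_norm_le Ni0); first by apply: addr_ge0 => //; apply: mulr_ge0 => //; exact: ltW.
  move=> [x y] Nxy.
  have x1 : `|x| <= 1 := le_trans (Ni_l x y) Nxy.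
  have y1 : `|y| <= 1 := le_trans (Ni_r x y) Nxy.
  have eqn : \sum_i l i * f i (x, y) - \sum_i l i * f' i (x, y) =
     (\sum_i l i * f i (x, 0) - \sum_i l i * f' i (x, 0)) +
     \sum_i l i * (f i (0, y) - f' i (0, y)).
    rewrite -!sumrB -big_split /=; apply: eq_bigr => i _.
    have fl := (fT i).1.1; have fl' := (f'T i).1.1.
    rewrite (pair_split x y) (lin_add fl) (lin_add fl').
    move: (f i (x,0)) (f i (0,y)) (f' i (x,0)) (f' i (0,y)) (l i) => a1 a2 a3 a4 c; ring.
  rewrite eqn; apply: le_trans (ler_normD _ _) _; apply: lerD.
    exact: (dual_norm_ge nX hbX).
  apply: conv_bound => // i; apply: le_trans (ler_normB _ _) _.
  rewrite mulr2n mulrDl mul1r.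
  have [z1 _] := Hza i.
  apply: lerD; apply: (inf_small _ z1) => //.
  - exact: (fT i).1.
  - apply: le_lt_trans (fT i).2; rewrite lerD2l lerN2; exact: minb.
  - exact: (f'T i).1.
  - apply: le_lt_trans (f'T i).2; rewrite lerD2l lerN2; exact: minb.
move=> h; have := lt_le_trans lt h; clearbody D; rewrite /b => {h lt}; lra.
Qed.

End PartD.

Section PartC.
Variables (R : realType).

Lemma unit_exists (V : normedModType R) : (exists x : V, x != 0) -> exists u : V, `|u| = 1.
Proof.
move=> [x x0]; exists (`|x|^-1 *: x).
by rewrite normrZ ger0_norm ?invr_ge0 // mulVf // normr_eq0.
Qed.

Lemma wsplit n (P : 'I_n -> bool) (l a : 'I_n -> R) : (forall i, 0 <= l i) ->
  \sum_i (if P i then l i * a i else 0) =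
  (\sum_i (if P i then l i else 0)) *
  \sum_i (if 0 < \sum_i (if P i then l i else 0)
          then (if P i then l i / \sum_i (if P i then l i else 0) else 0)
          else l i) * a i.
Proof.
move=> l0; set L := \sum_i (if P i then l i else 0).
have L0 : 0 <= L by apply: sumr_ge0 => i _; case: (P i).
case: (ltrP 0 L) => hL.
  rewrite mulr_sumr; apply: eq_bigr => i _; case: (P i); last by rewrite mul0r mulr0.
  by rewrite mulrA mulrCA mulfV ?mulr1 // gt_eqF.
have L00 : L = 0 by apply/eqP; rewrite eq_le hL L0.
rewrite L00 mul0r; apply: big1 => i _.
have : (if P i then l i else 0) = 0.
  move: L00; rewrite /L => /eqP; rewrite psumr_eq0; last by move=> j _; case: (P j).
  by move=> /allP /(_ i (mem_index_enum _)) /implyP /(_ isT) /eqP.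
by case: (P i) => // ->; rewrite mul0r.
Qed.

Lemma wconv n (P : 'I_n -> bool) (l : 'I_n -> R) : (forall i, 0 <= l i) ->
  \sum_i l i = 1 ->
  let L := \sum_i (if P i then l i else 0) in
  let mu := fun i => if 0 < L then (if P i then l i / L else 0) else l i in
  (forall i, 0 <= mu i) /\ \sum_i mu i = 1.
Proof.
move=> l0 l1 L mu; rewrite /mu; case hL: (0 < L); last by [].
split.
  by move=> i; case: (P i) => //; apply: divr_ge0 => //; exact: ltW.
have L0 : L != 0 by rewrite lt0r_neq0.
rewrite -[RHS](mulfV L0) {1}/L mulr_suml; apply: eq_bigr => i _.
by case: (P i); rewrite ?mul0r.
Qed.

Lemma wsplit2 n (P : 'I_n -> bool) (l a : 'I_n -> R) L (mu : 'I_n -> R) :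
  (forall i, 0 <= l i) -> L = \sum_i (if P i then l i else 0) ->
  mu = (fun i => if 0 < L then (if P i then l i / L else 0) else l i) ->
  \sum_i (if P i then l i * a i else 0) = L * \sum_i mu i * a i.
Proof. by move=> l0 -> ->; exact: wsplit. Qed.

Lemma wconv2 n (P : 'I_n -> bool) (l : 'I_n -> R) L (mu : 'I_n -> R) :
  (forall i, 0 <= l i) -> \sum_i l i = 1 -> L = \sum_i (if P i then l i else 0) ->
  mu = (fun i => if 0 < L then (if P i then l i / L else 0) else l i) ->
  (forall i, 0 <= mu i) /\ \sum_i mu i = 1.
Proof. by move=> l0 l1 -> ->; exact: wconv. Qed.

End PartC.

Section PartC2.
Variables (R : realType).

Lemma pick_apx (V : normedModType R) : wstar_SD2P (fun x : V => `|x|) ->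
  forall n (l : 'I_n -> R) (S : 'I_n -> set (V -> R)),
  (forall i, 0 <= l i) -> \sum_i l i = 1 ->
  (forall i, is_wstar_slice (fun x : V => `|x|) (S i)) -> forall e, 0 < e ->
  exists g g' : 'I_n -> V -> R, (forall i, S i (g i) /\ S i (g' i)) /\
    exists x : V, `|x| <= 1 /\ 2 - e < \sum_i l i * (g i x - g' i x).
Proof.
move=> H n l S l0 l1 Ss e e0.
have e2 : 0 < e / 2 by rewrite divr_gt0.
have [F [G [[g [gS ->]] [[g' [g'S ->]] lt]]]] := SD2P_apx H l0 l1 Ss e2.
exists g, g'; split; first by move=> i; split.
have hb : forall x : V, `|x| <= 1 ->
    `|\sum_i l i * g i x - \sum_i l i * g' i x| <= 2.
  move=> x x1.
  have cs1 : comb_sets l S (fun x => \sum_i l i * g i x) by exists g.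
  have cs2 : comb_sets l S (fun x => \sum_i l i * g' i x) by exists g'.
  apply: le_trans (comb_diff_bound x l0 l1 (fun i => slice_ball (Ss i)) cs1 cs2) _.
  by rewrite -[leRHS]mulr1 ler_wpM2l.
have nV : (fun x : V => `|x|) 0 = 0 by rewrite /= normr0.
have [x [x1 hx]] := dual_norm_adh nV hb e2.
have eqs : forall z, \sum_i l i * (g i z - g' i z) =
    \sum_i l i * g i z - \sum_i l i * g' i z.
  by move=> z; rewrite -sumrB; apply: eq_bigr => i _; rewrite mulrBr.
have lin : forall z, \sum_i l i * (g i (- z) - g' i (- z)) =
    - \sum_i l i * (g i z - g' i z).
  move=> z; rewrite -sumrN; apply: eq_bigr => i _.
  rewrite (linN _ (slice_ball (Ss i) (gS i)).1) (linN _ (slice_ball (Ss i) (g'S i)).1).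
  by rewrite -mulrN opprB opprK addrC.
move: hx; rewrite -eqs; set d := \sum_i _ => hx.
have lt2 : 2 - e < `|d|.
  by move: lt hx; clearbody d; move: (dual_norm _ _) => dd; lra.
case: (lerP 0 d) => hd.
  by exists x; split => //; move: lt2; rewrite ger0_norm.
exists (- x); split; first by rewrite normrN.
by rewrite lin -/d; move: lt2; rewrite ltr0_norm.
Qed.

Lemma part_c (X Y : normedModType R) :
  (exists x : X, x != 0) -> (exists y : Y, y != 0) ->
  wstar_SD2P (fun x : X => `|x|) -> wstar_SD2P (fun y : Y => `|y|) ->
  wstar_SD2P (@norm_suminf R X Y).
Proof.
move=> hX hY HX HY; have [u u1] := unit_exists hX; have [v v1] := unit_exists hY.
apply: SD2P_of; first exact: Ni0.
move=> n l S l0 l1 Ss e e0.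
have /choice [za Hza] : forall i, exists p : (X * Y) * R,
    norm_suminf p.1 = 1 /\ 0 < p.2 /\ S i = wstar_slice (@norm_suminf R X Y) p.1 p.2.
  by move=> i; have [z [a [z1 [a0 ->]]]] := Ss i; exists (z, a).
pose A i := `|(za i).1.1| == 1.
have yB : forall i, ~~ A i -> `|(za i).1.2| = 1.
  move=> i; rewrite /A; have [+ _] := Hza i; case: (za i).1 => x y /=.
  rewrite /norm_suminf /=; case: (lerP `|x| `|y|) => h.
    by [].
  by move=> ->; rewrite eqxx.
have a0 : forall i, 0 < (za i).2 by move=> i; case: (Hza i) => _ [].
pose SX i := wstar_slice (fun x : X => `|x|) (if A i then (za i).1.1 else u) (za i).2.
pose SY i := wstar_slice (fun y : Y => `|y|) (if A i then v else (za i).1.2) (za i).2.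
have SXs : forall i, is_wstar_slice (fun x : X => `|x|) (SX i).
  move=> i; exists (if A i then (za i).1.1 else u), (za i).2; split => //.
  by rewrite /A; case: ifP => // /eqP.
have SYs : forall i, is_wstar_slice (fun y : Y => `|y|) (SY i).
  move=> i; exists (if A i then v else (za i).1.2), (za i).2; split => //.
  by case: ifP => // /negbT /yB.
pose LA := \sum_i (if A i then l i else 0).
pose muX := fun i => if 0 < LA then (if A i then l i / LA else 0) else l i.
pose LB := \sum_i (if ~~ A i then l i else 0).
pose muY := fun i => if 0 < LB then (if ~~ A i then l i / LB else 0) else l i.
have [muX0 muX1] := @wconv2 _ _ A l LA muX l0 l1 erefl erefl.
have [muY0 muY1] := @wconv2 _ _ (fun i => ~~ A i) l LB muY l0 l1 erefl erefl.
have e2 : 0 < e / 2 by rewrite divr_gt0.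
have [g [g' [gS [x [x1 hx]]]]] := pick_apx HX muX0 muX1 SXs e2.
have [h [h' [hS [y [y1 hy]]]]] := pick_apx HY muY0 muY1 SYs e2.
have fS : forall (gg : 'I_n -> X -> R) (hh : 'I_n -> Y -> R),
    (forall i, SX i (gg i)) -> (forall i, SY i (hh i)) ->
    forall i, S i (fun z => if A i then gg i z.1 else hh i z.2).
  move=> gg hh ggS hhS i; have [_ [_ ->]] := Hza i.
  have [[gl gb] gz] := ggS i; have [[hl hb] hz] := hhS i.
  split; first split.
  - by move=> a z w; case: (A i); [exact: gl | exact: hl].
  - move=> [z w] /=; case: (A i).
      by apply: le_trans (gb z) _; exact: Ni_l.
    by apply: le_trans (hb w) _; exact: Ni_r.
  - by move: gz hz; rewrite /=; case: (A i).
have cs1 : comb_sets l S (fun z => \sum_i l i * (if A i then g i z.1 else h i z.2)).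
  exists (fun i z => if A i then g i z.1 else h i z.2); split => //.
  apply: fS => i; [exact: (gS i).1 | exact: (hS i).1].
have cs2 : comb_sets l S (fun z => \sum_i l i * (if A i then g' i z.1 else h' i z.2)).
  exists (fun i z => if A i then g' i z.1 else h' i z.2); split => //.
  apply: fS => i; [exact: (gS i).2 | exact: (hS i).2].
exists (fun z => \sum_i l i * (if A i then g i z.1 else h i z.2)).
exists (fun z => \sum_i l i * (if A i then g' i z.1 else h' i z.2)).
split => //; split => //.
have hb : forall z, norm_suminf z <= 1 ->
  `|\sum_i l i * (if A i then g i z.1 else h i z.2) -
    \sum_i l i * (if A i then g' i z.1 else h' i z.2)| <= 2.
  move=> z z1.
  apply: le_trans (comb_diff_bound z l0 l1 (fun i => slice_ball (Ss i)) cs1 cs2) _.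
  by rewrite -[leRHS]mulr1 ler_wpM2l.
have Nxy : @norm_suminf R X Y (x, y) <= 1 by rewrite /norm_suminf ge_max x1 y1.
apply: lt_le_trans (dual_norm_ge (@Ni0 R X Y) hb Nxy).
apply: lt_le_trans (ler_norm _) => /=.
have -> : \sum_i l i * (if A i then g i x else h i y) -
    \sum_i l i * (if A i then g' i x else h' i y) =
    \sum_i (if A i then l i * (g i x - g' i x) else 0) +
    \sum_i (if ~~ A i then l i * (h i y - h' i y) else 0).
  rewrite -sumrB -big_split; apply: eq_bigr => i _ /=.
  by case: (A i) => /=; rewrite ?addr0 ?add0r mulrBr.
rewrite (wsplit2 _ l0 (erefl LA) (erefl muX)).
rewrite (wsplit2 _ l0 (erefl LB) (erefl muY)).
have hLAB : LA + LB = 1.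
  rewrite -l1 /LA /LB -big_split; apply: eq_bigr => i _.
  by case: (A i); rewrite /= ?addr0 ?add0r.
have LA0 : 0 <= LA by apply: sumr_ge0 => i _; case: (A i).
have LB0 : 0 <= LB by apply: sumr_ge0 => i _; case: (A i) => //=.
have h1 := ler_wpM2l LA0 (ltW hx).
have h2 := ler_wpM2l LB0 (ltW hy).
have h3 : 2 - e / 2 <= LA * (\sum_i muX i * (g i x - g' i x)) +
    LB * (\sum_i muY i * (h i y - h' i y)).
  by apply: le_trans _ (lerD h1 h2); rewrite -mulrDl hLAB mul1r.
move: h3; clearbody LA LB muX muY.
move: (LA * _ + _) => t; lra.
Qed.

End PartC2.

Section PowFacts.
Variables (R : realType) (p : R).
Hypothesis p1 : 1 < p.

Let p0 : 0 < p. Proof. exact: lt_trans ltr01 p1. Qed.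

Lemma ppinv (a : R) : 0 <= a -> powR (powR a p) p^-1 = a.
Proof. by move=> a0; rewrite -powRrM mulfV ?gt_eqF // powRr1. Qed.

Lemma pinvp (a : R) : 0 <= a -> powR (powR a p^-1) p = a.
Proof. by move=> a0; rewrite -powRrM mulVf ?gt_eqF // powRr1. Qed.

Lemma powR_mono (a b : R) : 0 <= a -> 0 <= b -> a <= b -> powR a p <= powR b p.
Proof. by move=> a0 b0 ab; apply: ge0_ler_powR => //; exact: ltW. Qed.

Lemma powR_smono (a b : R) : 0 <= a -> 0 <= b -> a < b -> powR a p < powR b p.
Proof. by move=> a0 b0 ab; apply: gt0_ltr_powR. Qed.

Lemma le1_of_pow (a : R) : 0 <= a -> powR a p <= 1 -> a <= 1.
Proof.
move=> a0 h; rewrite leNgt; apply/negP => a1.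
have := powR_smono ler01 a0 a1; rewrite powR1; lra.
Qed.

Definition cst := powR (2^-1 : R) p^-1.

Lemma cst_ge0 : 0 <= cst. Proof. exact: powR_ge0. Qed.

Lemma cst_p : powR cst p = 2^-1.
Proof. by rewrite /cst pinvp // invr_ge0. Qed.

Lemma cst_lt1 : cst < 1.
Proof.
rewrite ltNge; apply/negP => h.
have := powR_mono ler01 cst_ge0 h; rewrite powR1 cst_p.
rewrite -[X in X <= _]invr1 lef_pV2 ?posrE //; lra.
Qed.

Lemma sum_bound (a b : R) : 0 <= a -> 0 <= b -> powR a p + powR b p <= 1 ->
  a + b <= 1 + cst.
Proof.
move=> a0 b0 h.
have pa := powR_ge0 a p; have pb := powR_ge0 b p.
have a1 : a <= 1 by apply: le1_of_pow => //; lra.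
have b1 : b <= 1 by apply: le1_of_pow => //; lra.
case: (lerP a cst) => ha; first lra.
have h1 := powR_smono cst_ge0 a0 ha; rewrite cst_p in h1.
case: (lerP cst b) => hb; last lra.
have h2 := powR_mono cst_ge0 b0 hb; rewrite cst_p in h2.

lra.
Qed.

Lemma small_s (e : R) : 0 < e -> exists s, 0 < s /\ powR s p <= s * e.
Proof.
move=> e0; exists (powR e (p - 1)^-1); split; first exact: powR_gt0.
set s := powR e (p - 1)^-1.
have s0 : 0 < s by exact: powR_gt0.
have pm1 : 0 < p by [].
rewrite -(mulr_powRB1 (ltW s0) pm1) ler_pM2l //.
rewrite /s -powRrM mulVf; last by rewrite subr_eq0 gt_eqF.
by rewrite powRr1 // ltW.
Qed.

End PowFacts.

Section PartB.
Variables (R : realType) (p : R) (X Y : normedModType R).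
Hypothesis p1 : 1 < p.
Local Notation Np := (@norm_sump R p X Y).

Let p0 : 0 < p. Proof. exact: lt_trans ltr01 p1. Qed.

Lemma Np_x0 (x : X) : Np (x, 0) = `|x|.
Proof. by rewrite /norm_sump /= normr0 powR0 ?gt_eqF // addr0 ppinv. Qed.
Lemma Np_0y (y : Y) : Np (0, y) = `|y|.
Proof. by rewrite /norm_sump /= normr0 powR0 ?gt_eqF // add0r ppinv. Qed.
Lemma Np0 : Np 0 = 0.
Proof. by have := Np_x0 0; rewrite normr0. Qed.

Lemma Np_le1 (x : X) (y : Y) : Np (x, y) <= 1 -> powR `|x| p + powR `|y| p <= 1.
Proof.
rewrite /norm_sump /= => h.
have T0 : 0 <= powR `|x| p + powR `|y| p by apply: addr_ge0; exact: powR_ge0.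
rewrite -(pinvp p1 T0); apply: le_trans (powR_mono p1 (powR_ge0 _ _) ler01 h) _.
by rewrite powR1.
Qed.

Lemma Np_bnd (x : X) (y : Y) s : `|x| = 1 -> `|y| = 1 -> 0 <= s ->
  Np (x, s *: y) <= 1 + powR s p.
Proof.
move=> x1 y1 s0; rewrite /norm_sump /= x1 normrZ y1 mulr1 ger0_norm // powR1.
apply: ler1_powR; first by rewrite lerDl powR_ge0.
by rewrite invf_le1 ?ltW.
Qed.

Lemma Np_bnd' (x : X) (y : Y) s : `|x| = 1 -> `|y| = 1 -> 0 <= s ->
  Np (s *: x, y) <= 1 + powR s p.
Proof.
move=> x1 y1 s0; rewrite /norm_sump /= y1 normrZ x1 mulr1 ger0_norm // powR1.
rewrite addrC; apply: ler1_powR; first by rewrite lerDl powR_ge0.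
by rewrite invf_le1 ?ltW.
Qed.

Lemma p_small (f : X * Y -> R) (x : X) (s a e : R) : dual_ball Np f ->
  `|x| = 1 -> 1 - a < f (x, 0) -> 0 < s -> a + powR s p <= s * e ->
  forall y, `|f (0, y)| <= e * `|y|.
Proof.
move=> fb x1 fx s0 hs; have fl := fb.1.
have unit : forall w : Y, `|w| = 1 -> f (0, w) < e.
  move=> w w1.
  have h1 : f (x, s *: w) <= 1 + powR s p.
    apply: le_trans (ler_norm _) _; apply: le_trans (ball_le _ fb) _.
    exact: Np_bnd x1 w1 (ltW s0).
  have e1 : (x, s *: w) = (x, 0) + s *: (0, w).
    by congr (_, _); rewrite /= ?scaler0 ?addr0 ?add0r.
  move: h1; rewrite e1 lin_add // linZ // => h1.
  have : s * f (0, w) < s * e by lra.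
  by rewrite ltr_pM2l.
have uabs : forall w : Y, `|w| = 1 -> `|f (0, w)| <= e.
  move=> w w1; rewrite ler_norml; apply/andP; split; last exact: ltW (unit w w1).
  have := unit (- w); rewrite normrN => /(_ w1).
  rewrite -[X in f (X, _)]oppr0 pairN linN //; lra.
move=> y; have [->|y0] := eqVneq y 0.
  have -> : ((0 : X), (0 : Y)) = 0 by [].
  by rewrite lin0 // normr0 normr0 mulr0.
pose w := `|y|^-1 *: y.
have w1 : `|w| = 1 by rewrite normrZ ger0_norm ?invr_ge0 // mulVf // normr_eq0.
have -> : ((0 : X), y) = `|y| *: (0, w).
  by congr (_, _); rewrite /= ?scaler0 // /w scalerA mulfV ?normr_eq0 // scale1r.
by rewrite linZ // normrM normr_id mulrC; apply: ler_wpM2r => //; exact: uabs.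
Qed.

Lemma p_small' (f : X * Y -> R) (y : Y) (s a e : R) : dual_ball Np f ->
  `|y| = 1 -> 1 - a < f (0, y) -> 0 < s -> a + powR s p <= s * e ->
  forall x, `|f (x, 0)| <= e * `|x|.
Proof.
move=> fb y1 fy s0 hs; have fl := fb.1.
have unit : forall w : X, `|w| = 1 -> f (w, 0) < e.
  move=> w w1.
  have h1 : f (s *: w, y) <= 1 + powR s p.
    apply: le_trans (ler_norm _) _; apply: le_trans (ball_le _ fb) _.
    exact: Np_bnd' w1 y1 (ltW s0).
  have e1 : (s *: w, y) = s *: (w, 0) + (0, y).
    by congr (_, _); rewrite /= ?scaler0 ?addr0 ?add0r.
  move: h1; rewrite e1 fl => h1.
  have : s * f (w, 0) < s * e by lra.
  by rewrite ltr_pM2l.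
have uabs : forall w : X, `|w| = 1 -> `|f (w, 0)| <= e.
  move=> w w1; rewrite ler_norml; apply/andP; split; last exact: ltW (unit w w1).
  have := unit (- w); rewrite normrN => /(_ w1).
  rewrite -[X in f (_, X)]oppr0 pairN linN //; lra.
move=> x; have [->|x0] := eqVneq x 0.
  have -> : ((0 : X), (0 : Y)) = 0 by [].
  by rewrite lin0 // normr0 normr0 mulr0.
pose w := `|x|^-1 *: x.
have w1 : `|w| = 1 by rewrite normrZ ger0_norm ?invr_ge0 // mulVf // normr_eq0.
have -> : (x, (0 : Y)) = `|x| *: (w, 0).
  by congr (_, _); rewrite /= ?scaler0 // /w scalerA mulfV ?normr_eq0 // scale1r.
by rewrite linZ // normrM normr_id mulrC; apply: ler_wpM2r => //; exact: uabs.
Qed.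

Lemma part_b : (exists x : X, x != 0) -> (exists y : Y, y != 0) -> ~ wstar_SD2P Np.
Proof.
move=> hX hY H; have [u u1] := unit_exists hX; have [v v1] := unit_exists hY.
pose c := cst p.
have c0 : 0 <= c := cst_ge0 p.
have c1 : c < 1 := cst_lt1 p1.
pose eps := (1 - c) / (2 * (1 + c)).
have eps0 : 0 < eps by apply: divr_gt0; lra.
have epsc : eps * (1 + c) = (1 - c) / 2.
  have hc : 1 + c != 0 by rewrite lt0r_neq0 //; lra.
  by rewrite /eps; field.
have eps20 : 0 < eps / 2 by rewrite divr_gt0.
have [s [s0 hs]] := small_s p1 eps20.
pose a := s * (eps / 2).
have a0 : 0 < a by rewrite mulr_gt0.
have has : a + powR s p <= s * eps.
  by move: hs; rewrite /a => hs; lra.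
pose S1 := wstar_slice Np (u, 0) a.
pose S2 := wstar_slice Np (0, v) a.
pose S (i : 'I_2) := if (i : nat) == 0%N then S1 else S2.
pose l (i : 'I_2) := (2^-1 : R).
have l0 : forall i, 0 <= l i by move=> i; rewrite /l invr_ge0.
have l1 : \sum_i l i = 1.
  by rewrite /l sumr_const card_ord mulr2n; lra.
have Ss : forall i, is_wstar_slice Np (S i).
  move=> i; rewrite /S; case: ifP => _.
    by exists (u, 0), a; rewrite Np_x0.
  by exists (0, v), a; rewrite Np_0y.
have d0 : 0 < (1 - c) / 2 by apply: divr_gt0; lra.
have [F [G [[f [fS ->]] [[g [gS ->]] lt]]]] := SD2P_apx H l0 l1 Ss d0.
have : dual_norm Np (fun z => \sum_i l i * f i z - \sum_i l i * g i z) <=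
    (1 + eps) * (1 + c).
  apply: (dual_norm_le Np0); first by apply: mulr_ge0; lra.
  move=> [x y] Nxy.
  have hxy := sum_bound p1 (normr_ge0 x) (normr_ge0 y) (Np_le1 Nxy).
  have f0S : S1 (f ord0) by exact: fS ord0.
  have g0S : S1 (g ord0) by exact: gS ord0.
  have f1S : S2 (f (lift ord0 ord0)) by exact: fS (lift ord0 ord0).
  have g1S : S2 (g (lift ord0 ord0)) by exact: gS (lift ord0 ord0).
  have B1 : forall h, S1 h -> `|h (x, y)| <= `|x| + eps * `|y|.
    move=> h [hb hu]; have hl := hb.1.
    rewrite (pair_split x y) lin_add //; apply: le_trans (ler_normD _ _) _.
    apply: lerD; first by rewrite -Np_x0; exact: ball_le.
    exact: (p_small hb u1 hu s0 has).
  have B2 : forall h, S2 h -> `|h (x, y)| <= eps * `|x| + `|y|.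
    move=> h [hb hv]; have hl := hb.1.
    rewrite (pair_split x y) lin_add //; apply: le_trans (ler_normD _ _) _.
    apply: lerD; last by rewrite -Np_0y; exact: ball_le.
    exact: (p_small' hb v1 hv s0 has).
  rewrite !big_ord_recl !big_ord0 /= !addr0 /l.
  have := B1 _ f0S; have := B1 _ g0S; have := B2 _ f1S; have := B2 _ g1S.
  move: (f ord0 (x, y)) (g ord0 (x, y)) (f (lift ord0 ord0) (x, y))
        (g (lift ord0 ord0) (x, y)) => A1 A2 A3 A4 h4 h3 h2 h1.
  have e1 : 2^-1 * A1 + 2^-1 * A3 - (2^-1 * A2 + 2^-1 * A4) =
      2^-1 * (A1 - A2) + 2^-1 * (A3 - A4) :> R by ring.
  rewrite e1; apply: le_trans (ler_normD _ _) _.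
  rewrite !normrM ger0_norm ?invr_ge0 //.
  have k1 := ler_normB A1 A2; have k2 := ler_normB A3 A4.
  have ex : `|x| + `|y| <= 1 + c := hxy.
  have := ler_wpM2l (ltW eps0) ex.
  move: (`|x|) (`|y|) (`|A1 - A2|) (`|A3 - A4|) (`|A1|) (`|A2|) (`|A3|) (`|A4|)
    (normr_ge0 x) (normr_ge0 y) ex k1 k2 h1 h2 h3 h4 => nx ny d1 d2 n1 n2 n3 n4.
  move=> nx0 ny0 ex k1 k2 h1 h2 h3 h4 hm.
  nra.
move=> h; have := lt_le_trans lt h; move: epsc.
clearbody eps c; lra.
Qed.

End PartB.

Section HB.
Variables (R : realType) (V : normedModType R) (y : V).

Definition gclosed (G : set (V * R)) := forall a v r w s, G (v, r) -> G (w, s) ->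
  G (a *: v + w, a * r + s).
Definition gfun (G : set (V * R)) := forall v r s, G (v, r) -> G (v, s) -> r = s.
Definition gbnd (G : set (V * R)) := forall v r, G (v, r) -> r <= `|v|.
Definition PG (G : set (V * R)) :=
  [/\ G = set0 \/ G (y, `|y|), gclosed G, gfun G & gbnd G].

Lemma PG_chain (F : set (set (V * R))) : F `<=` PG -> total_on F subset ->
  PG (\bigcup_(X in F) X).
Proof.
move=> FP tot.
have union2 : forall v r w s, (\bigcup_(X in F) X) (v, r) -> (\bigcup_(X in F) X) (w, s) ->
    exists X, F X /\ X (v, r) /\ X (w, s).
  move=> v r w s [X1 F1 X1v] [X2 F2 X2w].
  have [h12|h21] := tot _ _ F1 F2.
    by exists X2; split => //; split => //; apply: h12.
  by exists X1; split => //; split => //; apply: h21.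
split.
- have [[X [FX Xy]]|nex] := pselect (exists X, F X /\ X (y, `|y|)).
    by right; exists X.
  left; apply/seteqP; split => // [[v r]] [X FX Xvr].
  have [[X0|Xy] _ _ _] := FP X FX.
    by move: Xvr; rewrite X0.
  by exfalso; apply: nex; exists X.
- move=> a v r w s Hv Hw; have [X [FX [Xv Xw]]] := union2 _ _ _ _ Hv Hw.
  have [_ cl _ _] := FP X FX; exists X => //; exact: cl.
- move=> v r s Hv Hw; have [X [FX [Xv Xw]]] := union2 _ _ _ _ Hv Hw.
  have [_ _ fu _] := FP X FX; exact: fu Xv Xw.
- move=> v r [X FX Xv]; have [_ _ _ bd] := FP X FX; exact: bd Xv.
Qed.

Lemma PG_zero G : PG G -> G (y, `|y|) -> G (0, 0).
Proof.
move=> [_ cl _ _] Gy; have := cl (-1) _ _ _ _ Gy Gy.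
by rewrite scaleN1r addNr mulN1r addNr.
Qed.

Lemma PG_scale G a v r : PG G -> G (y, `|y|) -> G (v, r) -> G (a *: v, a * r).
Proof.
move=> PGG Gy Gv; have [_ cl _ _] := PGG.
by have := cl a _ _ _ _ Gv (PG_zero PGG Gy); rewrite !addr0.
Qed.

Lemma PG_extend G z : PG G -> G (y, `|y|) -> ~ (exists r, G (z, r)) ->
  exists B, G `<` B /\ PG B.
Proof.
move=> PGG Gy nz; have [_ cl fu bd] := PGG.
have G0 := PG_zero PGG Gy.
pose L := [set t | exists w r, G (w, r) /\ t = r - `|w - z|].
have Lub : forall w r w2 s2, G (w, r) -> G (w2, s2) -> r - `|w - z| <= `|w2 + z| - s2.
  move=> w r w2 s2 Gw Gw2.
  have := bd _ _ (cl 1 _ _ _ _ Gw Gw2); rewrite scale1r mul1r => h.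
  have : `|w + w2| <= `|w - z| + `|w2 + z|.
    have -> : w + w2 = (w - z) + (w2 + z) by rewrite addrACA addNr addr0.
    exact: ler_normD.
  lra.
have hsL : has_sup L.
  split; first by exists (0 - `|0 - z|), 0, 0.
  by exists (`|0 + z| - 0) => _ [w [r [Gw ->]]]; exact: Lub.
pose c := sup L.
have c_ge : forall w r, G (w, r) -> r - `|w - z| <= c.
  by move=> w r Gw; apply: sup_upper_bound => //; exists w, r.
have c_le : forall w r, G (w, r) -> c <= `|w + z| - r.
  move=> w r Gw; apply: ge_sup; first by exists (0 - `|0 - z|), 0, 0.
  by move=> _ [w' [r' [Gw' ->]]]; exact: Lub.
pose B := [set q | exists v r t, G (v, r) /\ q = (v + t *: z, r + t * c)].
have GB : G `<=` B.
  by move=> [v r] Gv; exists v, r, 0; rewrite scale0r mul0r !addr0.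
exists B; split.
  split => // BG; apply: nz; exists (0 + 1 * c).
  apply: BG; exists 0, 0, 1; split => //. by rewrite scale1r !add0r.
split.
- by right; apply: GB.
- move=> a _ _ _ _ [v [r [t [Gv [-> ->]]]]] [v' [r' [t' [Gv' [-> ->]]]]].
  exists (a *: v + v'), (a * r + r'), (a * t + t'); split; first exact: cl.
  congr (_, _).
    by rewrite scalerDr scalerA scalerDl addrACA.
  ring.
- move=> q r1 r2 [v [r [t [Gv [eq1 ->]]]]] [v' [r' [t' [Gv' [eq2 ->]]]]].
  have tt : t = t'.
    apply/eqP; apply/negPn/negP => ntt; apply: nz.
    have zeq : z = (t - t')^-1 *: (v' - v).
      apply: (@scalerI _ _ (t - t')); first by rewrite subr_eq0.
      rewrite scalerA mulfV ?subr_eq0 // scale1r scalerBl.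
      have e : v + t *: z = v' + t' *: z by rewrite -eq1 -eq2.
      have -> : v' = v + t *: z - t' *: z by rewrite e addrK.
      by rewrite [RHS]addrC addrA addKr.
    exists ((t - t')^-1 * (r' - r)); rewrite zeq.
    apply: (PG_scale _ PGG Gy).
    by have := cl (-1) _ _ _ _ Gv Gv'; rewrite scaleN1r mulN1r addrC [- r + _]addrC.
  subst t'; have vv : v = v' by move: eq1; rewrite eq2 => /addIr.
  by subst v'; rewrite (fu _ _ _ Gv Gv').
- move=> _ _ [v [r [t [Gv [[-> ->]]]]]].
  have [t0|t0|->] := ltrgtP t 0; last by rewrite scale0r mul0r !addr0; exact: bd.
    have s0 : 0 < - t by rewrite oppr_gt0.
    have := c_ge _ _ (PG_scale (- t)^-1 PGG Gy Gv).
    have -> : (- t)^-1 *: v - z = (- t)^-1 *: (v + t *: z).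
      by rewrite scalerDr scalerA invrN mulNr mulVf ?ltr0_neq0 // scaleN1r.
    rewrite normrZ ger0_norm; last by rewrite invr_ge0 ltW.
    move=> h.
    have := ler_wpM2l (ltW s0) h.
    rewrite mulrBr !mulrA mulfV ?lt0r_neq0 // !mul1r => h2; nra.
  have := c_le _ _ (PG_scale t^-1 PGG Gy Gv).
  have -> : t^-1 *: v + z = t^-1 *: (v + t *: z).
    by rewrite scalerDr scalerA mulVf ?gt_eqF // scale1r.
  rewrite normrZ ger0_norm; last by rewrite invr_ge0 ltW.
  move=> h.
  have := ler_wpM2l (ltW t0) h.
  rewrite mulrBr !mulrA mulfV ?gt_eqF // !mul1r => h2; nra.
Qed.

Lemma hahn_banach_norming : exists h : V -> R, is_linear_functional h /\
  (forall v, `|h v| <= `|v|) /\ h y = `|y|.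
Proof.
have [A [PA Amax]] := @Zorn_bigcup _ PG PG_chain.
have Ay : A (y, `|y|).
  have [[A0|//] _ _ _] := PA.
  pose B0 := [set q | exists t, q = (t *: y, t * `|y|)].
  have PB0 : PG B0.
    split.
    - by right; exists 1; rewrite scale1r mul1r.
    - move=> a _ _ _ _ [t [-> ->]] [t' [-> ->]].
      exists (a * t + t'); congr (_, _); first by rewrite scalerDl scalerA.
      by rewrite mulrDl mulrA.
    - move=> v r1 r2 [t [ev ->]] [t' [ev' ->]].
      have [->|y0] := eqVneq y 0; first by rewrite normr0 !mulr0.
      have : (t - t') *: y == 0 by rewrite scalerBl -ev -ev' subrr.
      by rewrite scaler_eq0 (negbTE y0) orbF subr_eq0 => /eqP ->.
    - move=> v r [t [[->] ->]]; rewrite normrZ; apply: ler_wpM2r => //.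
      exact: ler_norm.
  exfalso; apply: (Amax B0) => //; rewrite A0; split => // B00.
  by have := B00 (y, `|y|); apply; exists 1; rewrite scale1r mul1r.
have [_ cl fu bd] := PA.
have dom : forall v, exists r, A (v, r).
  move=> v; apply: contrapT => nv.
  have [B [AB PB]] := PG_extend PA Ay nv.
  exact: Amax AB PB.
have [h Hh] := choice dom.
have lin : is_linear_functional h.
  move=> a v w; apply: (fu _ _ _ (Hh _)); exact: cl.
exists h; split => //; split.
  move=> v; rewrite ler_norml; apply/andP; split; last exact: bd (Hh v).
  have := bd _ _ (PG_scale (-1) PA Ay (Hh v)).
  by rewrite scaleN1r normrN mulN1r lerNl.
exact: fu (Hh y) Ay.
Qed.

End HB.

Section PartA.
Variables (R : realType) (X Y : normedModType R).
Local Notation N1 := (@norm_sum1 R X Y).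

Lemma N10 : N1 0 = 0.
Proof. by rewrite /norm_sum1 /= !normr0 addr0. Qed.

Lemma part_a : (exists x : X, x != 0) ->
  wstar_SD2P (fun x : X => `|x|) -> wstar_SD2P N1.
Proof.
move=> hX HX; have [u u1] := unit_exists hX.
apply: SD2P_of; first exact: N10.
move=> n l S l0 l1 Ss e e0.
have /choice [za Hza] : forall i, exists p : (X * Y) * R,
    N1 p.1 = 1 /\ 0 < p.2 /\ S i = wstar_slice N1 p.1 p.2.
  by move=> i; have [z [a [z1 [a0 ->]]]] := Ss i; exists (z, a).
have /choice [hh Hh] : forall i, exists h : Y -> R, is_linear_functional h /\
    (forall v, `|h v| <= `|v|) /\ h (za i).1.2 = `|(za i).1.2|.
  by move=> i; exact: hahn_banach_norming.
pose zX i := if (za i).1.1 == 0 then u else `|(za i).1.1|^-1 *: (za i).1.1.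
pose bX i := if (za i).1.1 == 0 then (za i).2 else (za i).2 / `|(za i).1.1|.
pose SX i := wstar_slice (fun x : X => `|x|) (zX i) (bX i).
have SXs : forall i, is_wstar_slice (fun x : X => `|x|) (SX i).
  move=> i; exists (zX i), (bX i); split; last split => //.
    rewrite /zX; case: eqP => // /eqP x0.
    by rewrite normrZ ger0_norm ?invr_ge0 // mulVf // normr_eq0.
  have [_ [a0 _]] := Hza i; rewrite /bX; case: eqP => // /eqP x0.
  by rewrite divr_gt0 // normr_gt0.
have [g [g' [gS [x [x1 hx]]]]] := pick_apx HX l0 l1 SXs e0.
have fS : forall gg : 'I_n -> X -> R, (forall i, SX i (gg i)) ->
    forall i, S i (fun z => gg i z.1 + hh i z.2).
  move=> gg ggS i; have [z1 [a0 ->]] := Hza i.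
  have [[gl gb] gz] := ggS i; have [hl [hb hy]] := Hh i.
  split; first split.
  - move=> a [v w] [v' w'] /=; rewrite gl hl; ring.
  - move=> [v w]; rewrite /norm_sum1 /=; apply: le_trans (ler_normD _ _) _.
    exact: lerD.
  - move: a0 z1 gz hy; rewrite /norm_sum1 /zX /bX /=; case: (za i) => [[xi yi] a] /=.
    case: eqP => [-> | /eqP x0] a0 z1 gz hy; rewrite hy.
      by move: z1; rewrite normr0 add0r => ->; rewrite (lin0 gl) add0r; lra.
    have nx0 : 0 < `|xi| by rewrite normr_gt0.
    rewrite (linZ _ _ gl) in gz.
    have nz : `|xi| != 0 by rewrite gt_eqF.
    have key : gg i xi = `|xi| * (`|xi|^-1 * gg i xi) by field.
    have xw : `|xi| * `|xi|^-1 = 1 by field.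
    rewrite key; move: gz xw nx0 z1; move: (`|xi|^-1 * gg i xi) => t.
    move: (`|xi|^-1) => w; move: (`|xi|) => nx.
    move=> gz xw nx0 z1.
    have aw : nx * (a * w) = a by rewrite mulrCA xw mulr1.
    nra.
have cs1 : comb_sets l S (fun z => \sum_i l i * (g i z.1 + hh i z.2)).
  by exists (fun i z => g i z.1 + hh i z.2); split => //; apply: fS => i; exact: (gS i).1.
have cs2 : comb_sets l S (fun z => \sum_i l i * (g' i z.1 + hh i z.2)).
  by exists (fun i z => g' i z.1 + hh i z.2); split => //; apply: fS => i; exact: (gS i).2.
exists (fun z => \sum_i l i * (g i z.1 + hh i z.2)).
exists (fun z => \sum_i l i * (g' i z.1 + hh i z.2)).
split => //; split => //.
have hb : forall z, N1 z <= 1 ->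
  `|\sum_i l i * (g i z.1 + hh i z.2) - \sum_i l i * (g' i z.1 + hh i z.2)| <= 2.
  move=> z z1.
  apply: le_trans (comb_diff_bound z l0 l1 (fun i => slice_ball (Ss i)) cs1 cs2) _.
  by rewrite -[leRHS]mulr1 ler_wpM2l.
have Nx : N1 (x, 0) <= 1 by rewrite /norm_sum1 /= normr0 addr0.
apply: lt_le_trans (dual_norm_ge N10 hb Nx).
apply: lt_le_trans (ler_norm _) => /=.
have -> : \sum_i l i * (g i x + hh i 0) - \sum_i l i * (g' i x + hh i 0) =
    \sum_i l i * (g i x - g' i x).
  rewrite -sumrB; apply: eq_bigr => i _.
  rewrite (lin0 (Hh i).1); ring.
exact: hx.
Qed.


End PartA.


Unset Implicit Arguments.

Theorem corollary4p10 (R : realType) (X Y : completeNormedModType R)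
  (hX : exists x : X, x != 0) (hY : exists y : Y, y != 0) :
  (wstar_SD2P (fun x : X => `|x|) ->
     wstar_SD2P (@norm_sum1 R X Y)) /\
  (forall p : R, 1 < p -> ~ wstar_SD2P (@norm_sump R p X Y)) /\
  (wstar_SD2P (fun x : X => `|x|) -> wstar_SD2P (fun y : Y => `|y|) ->
     wstar_SD2P (@norm_suminf R X Y)) /\
  (wstar_SD2P (@norm_suminf R X Y) -> wstar_SD2P (fun x : X => `|x|)).
Proof.
split; first by move=> HX; exact: (part_a (Y:=Y) hX HX).
split; first by move=> p p1; exact: (part_b p1 hX hY).
split; first by move=> HX HY; exact: (part_c hX hY HX HY).
by move=> H; exact: (part_d H).
Qed.
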